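(* For every integer $n\ge 1$, the triangular stacked prism $Y_{3,n}$ is odd prime.
   Context: All graphs are finite and simple. A graph $G$ of order $N$ is odd prime if there is a bijection $\ell:V(G)\to\{1,3,\ldots,2N-1\}$ with $\gcd(\ell(u),\ell(v))=1$ for every edge $uv$. For $k\ge 3$, $n\ge 1$, the stacked prism $Y_{k,n}$ is the Cartesian product $C_k\,\square\,P_n$ of a $k$-cycle and a path on $n$ vertices: vertices $v_{i,j}$ ($1\le i\le n$, $1\le j\le k$), with edges $v_{i,j}v_{i,j+1}$ ($1\le j\le k-1$), $v_{i,k}v_{i,1}$ for each $i$, and $v_{i,j}v_{i+1,j}$ for $1\le i\le n-1$, $1\le j\le k$. *)

(* Defs.v *)
From mathcomp Require Import all_boot.
Set Implicit Arguments. Unset Strict Implicit. Unset Printing Implicit Defensive.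

Definition odd_label_set (N : nat) (m : nat) : bool := odd m && (m < 2 * N).

Definition odd_prime_labeling (V : finType) (adj : rel V) (l : V -> nat) : Prop :=
  [/\ injective l,
      (forall v, odd_label_set #|V| (l v)),
      (forall m, odd_label_set #|V| m -> exists v, l v = m)
    & (forall u v, adj u v -> coprime (l u) (l v))].

Definition odd_prime (V : finType) (adj : rel V) : Prop :=
  exists l : V -> nat, odd_prime_labeling adj l.

(* Stacked prism Y_{k,n} = C_k [] P_n.  Vertex v_{i,j} (1<=i<=n, 1<=j<=k)
   is represented by the pair (i-1, j-1) : 'I_n * 'I_k. *)
Definition prism_vertex (k n : nat) := ('I_n * 'I_k)%type.

Definition prism_adj (k n : nat) : rel (prism_vertex k n) :=
  fun x y =>
    (* cycle edges within a layer: v_{i,j} v_{i,j+1} and v_{i,k} v_{i,1} *)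
    ((x.1 == y.1) &&
       ((y.2 == (x.2.+1 %% k) :> nat) || (x.2 == (y.2.+1 %% k) :> nat)))
    ||
    ((x.2 == y.2) && ((y.1 == x.1.+1 :> nat) || (x.1 == y.1.+1 :> nat))).

(* Main.v *)
Require Import Defs.
From mathcomp Require Import all_boot.
From mathcomp Require Import zify.

Lemma cop_pow2 x k : odd x -> 0 < k -> coprime x (x + 2 ^ k).
Proof.
move=> ox k0; rewrite /coprime gcdnDl -/(coprime x (2 ^ k)).
by rewrite coprime_pexpr // coprimen2.
Qed.

Lemma key x y : odd x ->
  (y = x + 2 ^ 1 \/ y = x + 2 ^ 2 \/ y = x + 2 ^ 3 \/
   x = y + 2 ^ 1 \/ x = y + 2 ^ 2 \/ x = y + 2 ^ 3) -> coprime x y.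
Proof.
move=> ox [->|[->|[->|H]]]; try exact: cop_pow2.
have oy : odd y.
  by case: H => [|[|]] Hx; move: ox; rewrite Hx oddD /= ?addbF.
rewrite coprime_sym.
by case: H => [|[|]] ->; apply: cop_pow2.
Qed.

Definition lab n (v : prism_vertex 3 n) : nat :=
  6 * v.1 + 2 * ((v.1 + v.2) %% 3) + 1.

Theorem theorem3p6 (n : nat) (hn : 1 <= n) :
  odd_prime (@prism_adj 3 n).
Proof.
exists (@lab n); split.
- move=> [i1 j1] [i2 j2]; rewrite /lab /= => E.
  have Hj1 := ltn_ord j1; have Hj2 := ltn_ord j2.
  have [Ei Ej] : (i1 : nat) = i2 /\ (j1 : nat) = j2 by lia.
  by congr pair; apply: val_inj.
- move=> [i j]; rewrite /odd_label_set /lab /= card_prod !card_ord.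
  have Hi := ltn_ord i; have Hj := ltn_ord j.
  have -> : 6 * i + 2 * ((i + j) %% 3) + 1 = (3 * i + (i + j) %% 3).*2.+1 by lia.
  rewrite /= odd_double /=; lia.
- move=> m; rewrite /odd_label_set card_prod !card_ord => /andP[om lm].
  have hm := odd_double_half m; rewrite om in hm.
  have Hi : m %/ 6 < n by lia.
  have Hj : (((m %% 6) %/ 2) + 3 - (m %/ 6) %% 3) %% 3 < 3 by lia.
  exists (Ordinal Hi, Ordinal Hj); rewrite /lab /=; lia.
- move=> [i1 j1] [i2 j2]; rewrite /prism_adj /lab /=.
  have Hj1 := ltn_ord j1; have Hj2 := ltn_ord j2.
  move=> H; apply: key; first by
    rewrite (_ : _ + 1 = (3 * i1 + (i1 + j1) %% 3).*2.+1) /= ?odd_double //; lia.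
  case/orP: H => /andP[/eqP E /orP[] /eqP F].
  + move: E => /(congr1 val) /= E; lia.
  + move: E => /(congr1 val) /= E; lia.
  + move: E => /(congr1 val) /= E; lia.
  + move: E => /(congr1 val) /= E; lia.
Qed.
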